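(* Let $(G,+)$ be a group. Let $ICE(G)$ be the set of image-commuting pairs $(\varepsilon,\eta)$ of endomorphisms of $(G,+)$, and let $INR(G)$ be the set of interchange near rings $(G,+,\bullet)$ whose underlying group is $(G,+)$ (i.e. the set of binary operations $\bullet$ on $G$ satisfying the interchange law). Then the map $\Psi: ICE(G)\to INR(G)$, $\Psi(\varepsilon,\eta) = (G,+,\bullet_{(\varepsilon,\eta)})$ where $x\bullet_{(\varepsilon,\eta)} y = \varepsilon(x)+\eta(y)$, is a bijection.
   Context: An interchange near ring is a triple $(G,+,\bullet)$ where $(G,+)$ is a group (written additively, not necessarily abelian) and $\bullet$ is a binary operation on $G$ satisfying the interchange law $(w+x)\bullet(y+z) = (w\bullet y)+(x\bullet z)$ for all $w,x,y,z\in G$. A pair $(\varepsilon,\eta)$ of endomorphisms of $(G,+)$ is image-commuting if $\varepsilon(x)+\eta(y) = \eta(y)+\varepsilon(x)$ for all $x,y\in G$. *)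

(* Defs.v *)
Record is_group (G : Type) (add : G -> G -> G) (zero : G) (neg : G -> G) : Prop := {
  grp_assoc : forall x y z, add x (add y z) = add (add x y) z;
  grp_zero_l : forall x, add zero x = x;
  grp_zero_r : forall x, add x zero = x;
  grp_neg_l : forall x, add (neg x) x = zero;
  grp_neg_r : forall x, add x (neg x) = zero
}.

Definition is_endo {G : Type} (add : G -> G -> G) (f : G -> G) : Prop :=
  forall x y, f (add x y) = add (f x) (f y).

Definition image_commuting {G : Type} (add : G -> G -> G) (e h : G -> G) : Prop :=
  forall x y, add (e x) (h y) = add (h y) (e x).

Definition in_ICE {G : Type} (add : G -> G -> G) (p : (G -> G) * (G -> G)) : Prop :=
  is_endo add (fst p) /\ is_endo add (snd p) /\ image_commuting add (fst p) (snd p).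

Definition interchange {G : Type} (add : G -> G -> G) (op : G -> G -> G) : Prop :=
  forall w x y z, op (add w x) (add y z) = add (op w y) (op x z).

Definition in_INR {G : Type} (add : G -> G -> G) (op : G -> G -> G) : Prop :=
  interchange add op.

Definition Psi {G : Type} (add : G -> G -> G) (p : (G -> G) * (G -> G)) : G -> G -> G :=
  fun x y => add (fst p x) (snd p y).

(* Main.v *)
Require Import Defs.
From Stdlib Require Import FunctionalExtensionality.

Lemma endo_zero (G : Type) (add : G -> G -> G) (zero : G) (neg : G -> G)
  (HG : is_group G add zero neg) f : is_endo add f -> f zero = zero.
Proof.
  intros He. destruct HG as [A L R NL NR].
  assert (H : f zero = add (f zero) (f zero)) by (rewrite <- He, L; reflexivity).
  assert (H2 : add (neg (f zero)) (f zero) = add (neg (f zero)) (add (f zero) (f zero)))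
    by (rewrite <- H; reflexivity).
  rewrite A, NL, L in H2. symmetry; exact H2.
Qed.

Theorem theorem3p4 (G : Type) (add : G -> G -> G) (zero : G) (neg : G -> G)
  (HG : is_group G add zero neg) :
  (* Psi maps ICE(G) into INR(G) *)
  (forall p, in_ICE add p -> in_INR add (Psi add p)) /\
  (* Psi is injective on ICE(G) *)
  (forall p q, in_ICE add p -> in_ICE add q -> Psi add p = Psi add q -> p = q) /\
  (* Psi is surjective onto INR(G) *)
  (forall op, in_INR add op -> exists p, in_ICE add p /\ Psi add p = op).
Proof.
  pose proof HG as HG'. destruct HG' as [A L R NL NR].
  split; [|split].
  - intros [e h] [He [Hh Hc]]. unfold in_INR, interchange, Psi; simpl in *.
    intros w x y z. rewrite He, Hh.
    rewrite <- !A. f_equal. rewrite !A. f_equal. apply Hc.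
  - intros [e h] [e' h'] [He [Hh _]] [He' [Hh' _]] Heq. simpl in *.
    unfold Psi in Heq; simpl in Heq.
    assert (E : forall x y, add (e x) (h y) = add (e' x) (h' y)).
    { intros x y. change (add (e x) (h y)) with ((fun x y => add (e x) (h y)) x y).
      rewrite Heq. reflexivity. }
    f_equal; apply functional_extensionality; intro x.
    + specialize (E x zero). rewrite (endo_zero _ _ _ _ HG h Hh),
        (endo_zero _ _ _ _ HG h' Hh'), !R in E. exact E.
    + specialize (E zero x). rewrite (endo_zero _ _ _ _ HG e He),
        (endo_zero _ _ _ _ HG e' He'), !L in E. exact E.
  - intros op Hop. unfold in_INR, interchange in Hop.
    assert (S : forall x y, op x y = add (op x zero) (op zero y)).
    { intros x y. rewrite <- Hop, R, L. reflexivity. }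
    exists (fun x => op x zero, fun y => op zero y).
    split; [split; [|split]|].
    + intros x y; simpl. rewrite <- Hop, L. reflexivity.
    + intros x y; simpl. rewrite <- Hop, L. reflexivity.
    + intros x y; simpl. rewrite <- S, <- Hop, L, R. reflexivity.
    + unfold Psi; simpl. apply functional_extensionality; intro x;
      apply functional_extensionality; intro y. symmetry; apply S.
Qed.
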